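(* For the Byzantine-tolerant algorithm described in the context, under the fair distributed daemon and any Byzantine behaviour: if $\gamma$ is a degree-stabilized configuration such that $I_\gamma$ is not a maximal independent set of the subgraph induced by $V_2\cup I_\gamma$, then within the round starting at $\gamma$ at least one of the following happens: (1) the rule Candidacy? is executed on a node of $V_1$; (2) a configuration $\gamma'$ with $I_\gamma\subsetneq I_{\gamma'}$ is reached; (3) a configuration $\gamma'$ in which Candidacy? is enabled on some node of $V_2$ is reached.
   Context: Network and model. $G=(V,E)$ is a finite simple undirected graph; $N(u)$ is the open neighbourhood of $u$, $N[u]=N(u)\cup\{u\}$, $\deg(u)=|N(u)|$. Nodes are anonymous. Each node holds local variables; a configuration is an assignment of values to all local variables. A rule ''guard $\to$ command'' is enabled on $u$ in $\gamma$ if its guard (a predicate on the variables of $u$ and its neighbours) holds; its command rewrites only $u$'s variables, possibly randomly. $u$ is activable if some rule is enabled on it. A transition $\gamma\xrightarrow{t}\gamma'$ is given by a nonempty set $t$ of moves $(u,r)$ with $r$ enabled on $u$ in $\gamma$, at most one per node, all executed simultaneously from the values in $\gamma$. An execution is a sequence of consecutive transitions chosen by a daemon. The fair distributed daemon may choose any such $t$, subject to fairness: no node may remain activable forever without being activated. Rounds. The rounds of an execution are consecutive segments of transitions: the first round starts at the beginning of the execution, each subsequent round starts immediately after the previous one ends, and the current round ends as soon as every node $u\in V$ has either been activated in at least one transition of the round or been non-activable in at least one configuration of the round. Byzantine nodes. A subset $B\subseteq V$ consists of Byzantine nodes: always activable and, when activated, they may set their variables to arbitrary values. $d(u,B)$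 is the graph distance from $u$ to $B$ and $V_i=\{u\in V: d(u,B)>i\}$. Algorithm. Each node $u$ has variables $s_u\in\{\bot,\top\}$ and $x_u\in\mathbb{N}$; $Rand(q)$ returns $1$ with probability $q$, else $0$. Non-Byzantine nodes follow the rules: (Refresh) $x_u\neq \deg(u)\ \to\ x_u:=\deg(u)$. (Candidacy?) $x_u=\deg(u)\wedge s_u=\bot\wedge \forall v\in N(u),\ s_v=\bot\ \to$ if $Rand\big(\frac{1}{1+\max\{x_v: v\in N[u]\}}\big)=1$ then $s_u:=\top$. (Withdrawal) $x_u=\deg(u)\wedge s_u=\top\wedge \exists v\in N(u),\ s_v=\top\ \to\ s_u:=\bot$. For a configuration $\gamma$, $I_\gamma=\{u\in V_1: s_u^\gamma=\top \text{ and } \forall v\in N(u),\ s_v^\gamma=\bot\}$. $\gamma$ is degree-stabilized if $x_u^\gamma=\deg(u)$ for every non-Byzantine node $u$. *)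

(* Defs.v *)
From mathcomp Require Import all_boot all_order.
Set Implicit Arguments. Unset Strict Implicit. Unset Printing Implicit Defensive.

Section Model.
Variables (T : finType) (e : rel T) (B : {set T}).

Definition nbhd (u : T) : {set T} := [set v | e u v].
Definition deg (u : T) : nat := #|nbhd u|.

Fixpoint ball (k : nat) (u : T) : {set T} :=
  match k with
  | 0 => [set u]
  | k'.+1 => ball k' u :|: [set v | [exists w in ball k' u, e w v]]
  end.

(* u \in Vgt i  <->  d(u,B) > i  (no Byzantine node within distance i) *)
Definition Vgt (i : nat) : {set T} := [set u | [disjoint ball i u & B]].

(* configurations: s = true encodes top, s = false encodes bot *)
Record config := Config { sv : T -> bool; xv : T -> nat }.

Definition maxN (c : config) (u : T) : nat :=
  \max_(v | (v == u) || e u v) xv c v.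

Definition refresh_en (c : config) (u : T) : bool := xv c u != deg u.
Definition cand_en (c : config) (u : T) : bool :=
  [&& xv c u == deg u, ~~ sv c u & [forall v, e u v ==> ~~ sv c v]].
Definition withdraw_en (c : config) (u : T) : bool :=
  [&& xv c u == deg u, sv c u & [exists v, e u v && sv c v]].

Definition activable (c : config) (u : T) : bool :=
  [|| u \in B, refresh_en c u, cand_en c u | withdraw_en c u].

Inductive move := MRefresh | MCand | MWithdraw | MByz.

(* a transition: t u = None if u is not activated, Some r if u executes r *)
Definition step (c : config) (t : T -> option move) (c' : config) : Prop :=
  (exists u, t u <> None) /\
  forall u, match t u with
  | None => sv c' u = sv c u /\ xv c' u = xv c u
  | Some MByz => u \in B   (* arbitrary new values *)
  | Some MRefresh => u \notin B /\ refresh_en c u /\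
                     xv c' u = deg u /\ sv c' u = sv c u
  | Some MCand => u \notin B /\ cand_en c u /\ xv c' u = xv c u /\
      (* Rand(q) = 1 sets top; Rand(q) = 0 is possible only when q < 1 *)
      (sv c' u = true \/ (sv c' u = false /\ 1 <= maxN c u))
  | Some MWithdraw => u \notin B /\ withdraw_en c u /\
                      xv c' u = xv c u /\ sv c' u = false
  end.

Definition terminal (c : config) : Prop := forall u, ~~ activable c u.

(* An execution as an infinite sequence; a finite (maximal) execution ending in
   a terminal configuration is encoded by stuttering with no activated node. *)
Definition execution (c : nat -> config) (t : nat -> T -> option move) : Prop :=
  forall i, step (c i) (t i) (c i.+1) \/
            (terminal (c i) /\ (forall u, t i u = None) /\ c i.+1 = c i).

Definition fair (c : nat -> config) (t : nat -> T -> option move) : Prop :=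
  forall u i, exists2 j, i <= j &
    ~~ activable (c j) u \/ t j u <> None.

(* The segment of transitions 0..k (configurations c 0 .. c k.+1) satisfies
   the round-ending condition. *)
Definition round_cond (c : nat -> config) (t : nat -> T -> option move)
  (k : nat) : Prop :=
  forall u, (exists2 j, j <= k & t j u <> None) \/
            (exists2 j, j <= k.+1 & ~~ activable (c j) u).

Definition first_round_end c t (k : nat) : Prop :=
  round_cond c t k /\ forall k', k' < k -> ~ round_cond c t k'.

Definition Iset (c : config) : {set T} :=
  [set u in Vgt 1 | sv c u && [forall v, e u v ==> ~~ sv c v]].

Definition degree_stabilized (c : config) : Prop :=
  forall u, u \notin B -> xv c u = deg u.

End Model.

Definition independent (T : finType) (e : rel T) (I : {set T}) : Prop :=
  forall u v, u \in I -> v \in I -> ~~ e u v.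
Definition is_MIS (T : finType) (e : rel T) (W I : {set T}) : Prop :=
  I \subset W /\ independent e I /\
  forall w, w \in W -> w \notin I -> exists2 v, v \in I & e w v.

(* Main.v *)
Require Import Defs.
From mathcomp Require Import all_boot all_order.
From Stdlib Require Import Classical.
Set Implicit Arguments. Unset Strict Implicit.

Lemma ex_min_prop (P : nat -> Prop) :
  (exists n, P n) -> exists n, P n /\ forall m, m < n -> ~ P m.
Proof.
move=> [n Pn]; apply: NNPP => H.
have: forall n m, m < n -> ~ P m.
  elim=> [|n0 IH] m // hm Pm; apply: H; exists m; split => // m' hm'.
  apply: IH; rewrite ltnS in hm; exact: leq_trans hm' hm.
by move/(_ n.+1 n (ltnSn n)); apply.
Qed.

Lemma down (P : nat -> Prop) n :
  (forall j, j < n -> P j.+1 -> P j) -> P n -> forall j, j <= n -> P j.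
Proof.
move=> H Pn j hj.
have: forall d j, j + d = n -> P j.
  elim=> [|d IH] i hi; first by rewrite addn0 in hi; rewrite hi.
  apply: H; first by rewrite -hi addnS ltnS leq_addr.
  by apply: IH; rewrite addSnnS.
by move/(_ (n - j) j); apply; rewrite subnKC.
Qed.

Lemma ballS (T : finType) (e : rel T) k u :
  ball e k.+1 u = ball e k u :|: [set v | [exists w in ball e k u, e w v]].
Proof. by []. Qed.

Lemma ball_self (T : finType) (e : rel T) k (u : T) : u \in ball e k u.
Proof. elim: k => [|k IH]; first by rewrite /= inE. by rewrite ballS inE IH. Qed.

Lemma ball_nb (T : finType) (e : rel T) k (w v : T) :
  e w v -> ball e k v \subset ball e k.+1 w.
Proof.
move=> ewv; elim: k => [|k IH].
  apply/subsetP=> x; rewrite /= inE => /eqP ->.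
  apply/setUP; right; rewrite inE; apply/existsP; exists w; by rewrite inE eqxx.
apply/subsetP=> x; rewrite (ballS e k v) => /setUP [Hx|Hx];
  rewrite (ballS e k.+1 w); apply/setUP.
  by left; exact: (subsetP IH x Hx).
rewrite inE in Hx; move/existsP: Hx => [y /andP [yb eyx]]; right.
rewrite inE; apply/existsP; exists y.
by rewrite (subsetP IH y yb) eyx.
Qed.

Lemma Vgt_notB (T : finType) (e : rel T) B i u : u \in Vgt e B i -> u \notin B.
Proof. by rewrite inE => H; rewrite (disjointFr H (ball_self e i u)). Qed.

Lemma Vgt_nb (T : finType) (e : rel T) B i w v :
  w \in Vgt e B i.+1 -> e w v -> v \in Vgt e B i.
Proof. rewrite !inE => H ewv; exact: disjointWl (ball_nb i ewv) H. Qed.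

Lemma Vgt_S (T : finType) (e : rel T) B i u :
  u \in Vgt e B i.+1 -> u \in Vgt e B i.
Proof. rewrite !inE => H; apply: disjointWl H; by rewrite ballS subsetUl. Qed.

Lemma step_cases (T : finType) (e : rel T) (B : {set T}) c t
  (ex : execution e B c t) j u (uB : u \notin B)
  (st : degree_stabilized e B (c j)) :
  (t j u = None /\ sv (c j.+1) u = sv (c j) u) \/
  (t j u = Some MCand /\ cand_en e (c j) u) \/
  (t j u = Some MWithdraw /\ withdraw_en e (c j) u /\ sv (c j.+1) u = false).
Proof.
case: (ex j) => [[_ H]|[_ [Hn ->]]]; last by left; rewrite Hn.
move: (H u); case E: (t j u) => [m|]; last by move=> [-> _]; left.
case: m E => E /=.
- by move=> [_ [Hr _]]; move: Hr; rewrite /refresh_en st // eqxx.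
- by move=> [_ [Hc _]]; right; left.
- by move=> [_ [Hw [_ Hs]]]; right; right.
- by move=> Hb; rewrite Hb in uB.
Qed.

Lemma stab_all (T : finType) (e : rel T) (B : {set T}) c t
  (ex : execution e B c t) :
  degree_stabilized e B (c 0) -> forall j, degree_stabilized e B (c j).
Proof.
move=> st0; elim => // j IH u uB.
case: (ex j) => [[_ H]|[_ [_ ->]]]; last exact: IH.
move: (H u); case: (t j u) => [[]|] /=.
- by move=> [_ [_ [-> _]]].
- by move=> [_ [_ [-> _]]]; exact: IH.
- by move=> [_ [_ [-> _]]]; exact: IH.
- by move=> Hb; rewrite Hb in uB.
- by move=> [_ ->]; exact: IH.
Qed.

Lemma I_inv (T : finType) (e : rel T) (B : {set T}) (esym : symmetric e) c t
  (ex : execution e B c t) (st0 : degree_stabilized e B (c 0)) :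
  forall j u, u \in Iset e B (c 0) ->
    sv (c j) u /\ forall v, e u v -> ~~ sv (c j) v.
Proof.
move=> j u; rewrite inE => /andP [uV1 /andP [su /forallP hn]].
elim: j => [|j [IHs IHn]].
  by split => // v euv; exact: (implyP (hn v)).
have uB := Vgt_notB uV1. have stj := stab_all ex st0 j.
split.
- case: (step_cases ex uB stj) =>
    [[_ ->]//|[[_ /and3P[_ ns _]]|[_ [/and3P[_ _ /existsP [v /andP [euv sv']]] _]]]].
  + by rewrite IHs in ns.
  + by move: (IHn v euv); rewrite sv'.
- move=> v euv. have vV0 := Vgt_nb uV1 euv. have vB := Vgt_notB vV0.
  case: (step_cases ex vB stj) =>
    [[_ ->]|[[_ /and3P[_ _ /forallP hv]]|[_ [_ ->]]]] //; first exact: IHn.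
  by move: (hv u); rewrite esym euv IHs.
Qed.

Theorem mainTheorem9 (T : finType) (e : rel T) (B : {set T})
  (esym : symmetric e) (eirr : irreflexive e)
  (c : nat -> config T) (t : nat -> T -> option move) :
  execution e B c t -> fair e B c t ->
  degree_stabilized e B (c 0) ->
  ~ is_MIS e (Vgt e B 2 :|: Iset e B (c 0)) (Iset e B (c 0)) ->
  exists k, first_round_end e B c t k /\
    [\/ exists j u, [/\ j <= k, u \in Vgt e B 1 & t j u = Some MCand],
        exists2 j, j <= k.+1 & Iset e B (c 0) \proper Iset e B (c j)
      | exists j u, [/\ j <= k.+1, u \in Vgt e B 2 & cand_en e (c j) u]].
Proof.
move=> ex fr stab0 nmis.
have stab := stab_all ex stab0.
have [k [rc kmin]] : exists k, first_round_end e B c t k.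
  have H : forall u, exists j, ~~ activable e B (c j) u || isSome (t j u).
    move=> u; case: (fr u 0) => j _ [h|h]; exists j; first by rewrite h.
    by rewrite orbC; case: (t j u) h => [m|] //= h'; exfalso; exact: h' erefl.
  pose jf u := xchoose (H u).
  have: round_cond e B c t (\max_u jf u).
    move=> u; have le : jf u <= \max_u jf u := leq_bigmax u.
    have hj := xchooseP (H u); rewrite -/(jf u) in hj.
    case/orP: hj => hj; first by right; exists (jf u) => //; exact: leqW le.
    by left; exists (jf u) => //; case: (t _ u) hj.
  move=> hr; have [k [hk hmin]] := ex_min_prop (ex_intro _ _ hr).
  by exists k; split.
exists k; split; first by split.
set I0 := Iset e B (c 0).
have [w [wW wI wN]] : exists w, [/\ w \in Vgt e B 2 :|: I0, w \notin I0
                                  & forall v, v \in I0 -> ~~ e w v].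
  apply: NNPP => Hn; apply: nmis; split; [|split].
  - by apply/subsetP=> x xI; rewrite inE xI orbT.
  - move=> u v; rewrite /I0 !inE => /andP[_ /andP[_ /forallP hu]] /andP[_ /andP[svv _]].
    by apply/negP => euv; move: (hu v); rewrite euv svv.
  - move=> x xW xI; apply: NNPP => hx; apply: Hn; exists x; split => // v vI.
    by apply/negP => exv; apply: hx; exists v.
have wV2 : w \in Vgt e B 2 by move: wW; rewrite inE (negbTE wI) orbF.
have wV1 := Vgt_S wV2. have wB := Vgt_notB wV1.
apply: NNPP => H3.
have n1 : forall j u, j <= k -> u \in Vgt e B 1 -> t j u <> Some MCand.
  by move=> j u hj hu ht; apply: H3; apply: Or31; exists j, u.
have n2 : forall j, j <= k.+1 -> ~ (I0 \proper Iset e B (c j)).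
  by move=> j hj hp; apply: H3; apply: Or32; exists j.
have n3 : forall j u, j <= k.+1 -> u \in Vgt e B 2 -> ~~ cand_en e (c j) u.
  by move=> j u hj hu; apply/negP => hc; apply: H3; apply: Or33; exists j, u.
have Ieq : forall j x, j <= k.+1 -> x \in Iset e B (c j) -> x \in I0.
  move=> j x hj hx.
  have sub : I0 \subset Iset e B (c j).
    apply/subsetP=> u uI; have [s1 s2] := I_inv esym ex stab0 j uI.
    move: uI; rewrite /I0 inE => /andP [uV1 _].
    rewrite inE uV1 s1 /=; apply/forallP=> v; apply/implyP; exact: s2.
  apply: NNPP => hn; apply: (n2 j hj); rewrite properE sub /=.
  by apply/negP => /subsetP h; apply: hn; apply: h.
have nbw : forall j, j <= k.+1 -> exists2 v, e w v & sv (c j) v.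
  move=> j hj; have := n3 j w hj wV2; rewrite /cand_en stab // eqxx /=.
  case: (boolP (sv (c j) w)) => hs /=.
  - move=> _; apply: NNPP => hne.
    have: w \in Iset e B (c j).
      rewrite inE wV1 hs /=; apply/forallP=> v; apply/implyP=> ewv.
      by apply/negP=> svv; apply: hne; exists v.
    by move/(Ieq j w hj); rewrite (negbTE wI).
  - move/forallPn => [v]; rewrite negb_imply negbK => /andP [ewv svv].
    by exists v.
have [v ewv svk] := nbw k.+1 (leqnn _).
have vV1 := Vgt_nb wV2 ewv. have vB := Vgt_notB vV1.
have mono : forall j, j < k.+1 -> sv (c j.+1) v -> sv (c j) v.
  move=> j hj h.
  case: (step_cases ex vB (stab j)) => [[_ E]|[[E _]|[_ [_ E]]]].
  - by rewrite -E.
  - by case: (n1 j v hj vV1 E).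
  - by rewrite E in h.
have allv : forall j, j <= k.+1 -> sv (c j) v.
  exact: (down (P := fun j => sv (c j) v) mono svk).
have vI : v \notin I0 by apply/negP => vI; move: (wN v vI); rewrite ewv.
case: (rc v) => [[j hj ht]|[j hj hna]].
- case: (step_cases ex vB (stab j)) => [[E _]|[[E _]|[_ [_ E]]]].
  + exact: ht E.
  + exact: n1 j v hj vV1 E.
  + by move: (allv j.+1 hj); rewrite E.
- have: v \in Iset e B (c j).
    rewrite inE vV1 (allv j hj) /=; apply/forallP => x; apply/implyP => evx.
    apply/negP => sx.
    move/norP: hna => [_ /norP [_ /norP [_ hw]]].
    move: hw; rewrite /withdraw_en stab // eqxx (allv j hj) /=.
    by move/negP; apply; apply/existsP; exists x; rewrite evx sx.
  by move/(Ieq j v hj); rewrite (negbTE vI).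
Qed.
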